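(* Let $k\geq 1$ and $n\geq 1$ be integers. Then 1. $B_{k,2n}=B_{k,n}\bigl(B_{k,n+1}+(1-k)B_{k,n-1}\bigr)$; 2. $B_{k,2n-1}=B_{k,n}^2+(1-k)B_{k,n-1}^2$.
   Context: For an integer $k\geq 1$, the generalized balancing numbers are defined by $B_{k,0}=0$, $B_{k,1}=1$ and $B_{k,n}=3kB_{k,n-1}+(1-k)B_{k,n-2}$ for $n\geq 2$. *)

(* Defs.v *)
From mathcomp Require Import all_boot all_order all_algebra.
Set Implicit Arguments. Unset Strict Implicit. Unset Printing Implicit Defensive.
Import Order.TTheory GRing.Theory Num.Theory.
Local Open Scope ring_scope.

Fixpoint genBal (k : nat) (n : nat) : int :=
  match n with
  | 0%N => 0
  | 1%N => 1
  | (m.+1 as n1).+1 =>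
      (3 * k)%:Z * genBal k n1 + (1 - k%:Z) * genBal k m
  end.

(* Main.v *)
Require Import Defs.
From mathcomp Require Import all_boot all_order all_algebra.
From mathcomp Require Import ring zify.
Import Order.TTheory GRing.Theory Num.Theory.
Local Open Scope ring_scope.

Lemma genBalSS k m : genBal k m.+2 = (3 * k)%:Z * genBal k m.+1 + (1 - k%:Z) * genBal k m.
Proof. by []. Qed.

Lemma addF k m : forall n,
  genBal k (m + n).+1 = genBal k m.+1 * genBal k n.+1 + (1 - k%:Z) * genBal k m * genBal k n
  /\ genBal k (m.+1 + n).+1 = genBal k m.+2 * genBal k n.+1 + (1 - k%:Z) * genBal k m.+1 * genBal k n.
Proof.
elim: m => [|m IH] n.
  split; first by rewrite add0n /=; ring.
  by rewrite add1n genBalSS /=; ring.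
have [H1 H2] := IH n. split; first exact: H2.
rewrite !addSn genBalSS -addSn H2.
rewrite -/(addn m n) in H1 *.
move: H1; rewrite -addSn => H1. rewrite H1 [genBal k m.+3]genBalSS [genBal k m.+2]genBalSS.
ring.
Qed.

Theorem mainTheorem20 (k n : nat) (hk : (1 <= k)%N) (hn : (1 <= n)%N) :
  genBal k (2 * n) = genBal k n * (genBal k n.+1 + (1 - k%:Z) * genBal k n.-1)
  /\ genBal k (2 * n).-1 = genBal k n ^+ 2 + (1 - k%:Z) * genBal k n.-1 ^+ 2.
Proof.
case: n hn => [//|n] _. rewrite [n.+1.-1]/=.
have -> : (2 * n.+1 = (n + n.+1).+1)%N by lia.
have -> : ((n + n.+1).+1.-1 = (n + n).+1)%N by lia.
have [H1 _] := addF k n n.+1.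
have [H2 _] := addF k n n.
rewrite H1 H2. split; ring.
Qed.
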